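(* Let $A,B\in\mathbb{R}^{m\times n}$ with $m<n$ and $\operatorname{rank}(A)=m$. Let $A_1\in\mathbb{R}^{m\times m}$ be a nonsingular submatrix of $A$ formed by some $m$ columns of $A$, and let $B_1\in\mathbb{R}^{m\times m}$ be the submatrix of $B$ formed by the same column indices. If $\|A_1^{-1}B_1\|_p<1$ for some $1\le p\le\infty$, then for any given $b\in\mathbb{R}^m$ the generalized absolute value equation $Ax-B|x|=b$ has infinitely many solutions $x\in\mathbb{R}^n$.
   Context: $|x|$ denotes the entrywise absolute value. $\|\cdot\|_p$ on matrices denotes the operator norm induced by the vector $p$-norm. *)

(* Defs.v *)
From HB Require Import structures.
From mathcomp Require Import all_boot all_order all_algebra.
From mathcomp Require Import all_classical all_reals all_analysis.
Set Implicit Arguments. Unset Strict Implicit. Unset Printing Implicit Defensive.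
Import Order.TTheory GRing.Theory Num.Theory.
Local Open Scope ring_scope.
Local Open Scope classical_set_scope.

Definition vnorm (R : realType) (k : nat) (p : \bar R) (x : 'cV[R]_k) : R :=
  match p with
  | r%:E => (\sum_(i < k) `|x i 0| `^ r) `^ r^-1
  | _ => \big[Num.max/0]_(i < k) `|x i 0|
  end.

Definition opnorm (R : realType) (k l : nat) (p : \bar R) (M : 'M[R]_(k, l)) : R :=
  sup [set vnorm p (M *m x) / vnorm p x | x in [set x : 'cV[R]_l | x != 0]].

Definition mabs (R : realType) (k l : nat) (M : 'M[R]_(k, l)) : 'M[R]_(k, l) :=
  map_mx (fun a : R => `|a|) M.

(* Main.v *)
Require Import Defs.
From HB Require Import structures.
From mathcomp Require Import all_boot all_order all_algebra.
From mathcomp Require Import all_classical all_reals all_analysis.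
Import Order.TTheory GRing.Theory Num.Theory.
Local Open Scope ring_scope.
Import numFieldNormedType.Exports.
Local Open Scope classical_set_scope.

Section VN.
Variable R : realType.

Lemma bigmax_ub (I : eqType) (s : seq I) (F : I -> R) i :
  i \in s -> F i <= \big[Num.max/0]_(j <- s) F j.
Proof.
elim: s => [//|a s IH]; rewrite inE big_cons => /orP[/eqP->|/IH H].
  by rewrite le_max lexx.
by rewrite le_max H orbT.
Qed.

Lemma bigmax_lub (I : Type) (s : seq I) (F : I -> R) a :
  0 <= a -> (forall i, F i <= a) -> \big[Num.max/0]_(j <- s) F j <= a.
Proof.
move=> a0 H; elim: s => [|b s IH]; first by rewrite big_nil.
by rewrite big_cons ge_max H IH.
Qed.

Variables (k : nat) (p : \bar R).
Hypothesis hp : (1%:E <= p)%E.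

Lemma vnorm_ge0 (x : 'cV[R]_k) : 0 <= vnorm p x.
Proof.
case: p hp => [r||] /=; rewrite ?leeNy_eq //; first by rewrite powR_ge0.
move=> _; apply: (big_ind (fun y => 0 <= y)) => // u v u0 v0.
by rewrite le_max u0.
Qed.

Lemma vnorm_coord (x : 'cV[R]_k) i : `|x i 0| <= vnorm p x.
Proof.
case: p hp => [r||] /=; rewrite ?leeNy_eq //.
  rewrite lee_fin => r1.
  have r0 : 0 < r by apply: lt_le_trans r1.
  have -> : `|x i 0| = (`|x i 0| `^ r) `^ r^-1.
    by rewrite -powRrM mulfV ?gt_eqF // powRr1.
  have ri : 0 <= r^-1 by rewrite invr_ge0 ltW.
  apply: ge0_ler_powR => //.
  - by rewrite nnegrE powR_ge0.
  - by rewrite nnegrE sumr_ge0 // => j _; rewrite powR_ge0.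
  rewrite (bigD1 i) //= lerDl sumr_ge0 // => j _; exact: powR_ge0.
move=> _; apply: (@bigmax_ub _ (index_enum _) (fun j => `|x j 0|)).
by rewrite mem_index_enum.
Qed.

Lemma vnorm_mono (x y : 'cV[R]_k) :
  (forall i, `|x i 0| <= `|y i 0|) -> vnorm p x <= vnorm p y.
Proof.
move=> H.
case: p hp => [r||] /=; rewrite ?leeNy_eq //.
  rewrite lee_fin => r1.
  have r0 : 0 < r by apply: lt_le_trans r1.
  have ri : 0 <= r^-1 by rewrite invr_ge0 ltW.
  apply: ge0_ler_powR => //.
  - by rewrite nnegrE sumr_ge0 // => j _; rewrite powR_ge0.
  - by rewrite nnegrE sumr_ge0 // => j _; rewrite powR_ge0.
  apply: ler_sum => j _; apply: ge0_ler_powR; [exact: ltW|by rewrite nnegrE|by rewrite nnegrE|exact: H].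
move=> _; apply: bigmax_lub.
  exact: (le_trans (normr_ge0 _) (H ord0)) || (apply: (big_ind (fun y => 0 <= y)) => // u v u0 v0; by rewrite le_max u0).
move=> i; apply: (le_trans (H i)).
exact: (@bigmax_ub _ (index_enum _) (fun j => `|y j 0|) i (mem_index_enum _)).
Qed.

Lemma vnorm_bound : exists K, 0 <= K /\ forall (x : 'cV[R]_k) a, 0 <= a ->
  (forall i, `|x i 0| <= a) -> vnorm p x <= K * a.
Proof.
case: p hp => [r||] /=; rewrite ?leeNy_eq //.
  rewrite lee_fin => r1.
  have r0 : 0 < r by apply: lt_le_trans r1.
  exists (k%:R `^ r^-1); split; first exact: powR_ge0.
  move=> x a a0 H.
  apply: (@le_trans _ _ ((\sum_(i < k) a `^ r) `^ r^-1)).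
    have ri : 0 <= r^-1 by rewrite invr_ge0 ltW.
    apply: ge0_ler_powR => //.
    - by rewrite nnegrE sumr_ge0 // => j _; rewrite powR_ge0.
    - by rewrite nnegrE sumr_ge0 // => j _; rewrite powR_ge0.
    apply: ler_sum => j _; apply: ge0_ler_powR; [exact: ltW|by rewrite nnegrE|by rewrite nnegrE|exact: H].
  rewrite sumr_const card_ord -[a `^ r *+ k]mulr_natl powRM ?powR_ge0 //.
  by rewrite -powRrM mulfV ?gt_eqF // powRr1.
move=> _; exists 1; split => // x a a0 H; rewrite mul1r.
exact: bigmax_lub.
Qed.


Lemma vnorm0 : vnorm p (0 : 'cV[R]_k) = 0.
Proof.
have [K [K0 HK]] := vnorm_bound.
apply/eqP; rewrite eq_le vnorm_ge0 andbT.
by rewrite -(mulr0 K); apply: HK => // i; rewrite mxE normr0.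
Qed.

Lemma vnorm_gt0 (x : 'cV[R]_k) : x != 0 -> 0 < vnorm p x.
Proof.
move=> x0.
case/boolP: [exists i, x i 0 != 0] => [/existsP [i xi] | /existsPn H].
  by apply: lt_le_trans (vnorm_coord x i); rewrite normr_gt0.
case/eqP: x0; apply/matrixP => a b; rewrite (ord1 b) mxE.
by have := H a; rewrite negbK => /eqP.
Qed.

Lemma contraction (M : 'M[R]_k) : opnorm p M < 1 ->
  exists q, 0 <= q < 1 /\ forall x, vnorm p (M *m x) <= q * vnorm p x.
Proof.
move=> Mlt.
have [K [K0 HK]] := vnorm_bound.
pose C := \sum_i \sum_j `|M i j|.
have C0 : 0 <= C by apply: sumr_ge0 => i _; apply: sumr_ge0.
have HM : forall x, vnorm p (M *m x) <= K * C * vnorm p x.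
  move=> x; rewrite -mulrA; apply: HK; first by rewrite mulr_ge0 ?vnorm_ge0.
  move=> i; rewrite mxE; apply: le_trans (ler_norm_sum _ _ _) _.
  apply: (@le_trans _ _ (\sum_j `|M i j| * vnorm p x)).
    by apply: ler_sum => j _; rewrite normrM ler_wpM2l // vnorm_coord.
  rewrite -mulr_suml ler_wpM2r ?vnorm_ge0 //.
  by rewrite /C [X in _ <= X](bigD1 i) //= lerDl sumr_ge0 // => ? _; apply: sumr_ge0.
exists (Num.max 0 (opnorm p M)); split.
  by rewrite le_max lexx /= gt_max ltr01 Mlt.
move=> x; have [->|x0] := eqVneq x 0.
  by rewrite mulmx0 vnorm0 mulr0.
have vx := @vnorm_gt0 x x0.
set S := [set vnorm p (M *m y) / vnorm p y | y in [set y : 'cV[R]_k | y != 0]].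
have hs : has_sup S.
  split; first by exists (vnorm p (M *m x) / vnorm p x); exists x.
  exists (K * C) => _ [y /= y0 <-].
  by rewrite ler_pdivrMr ?vnorm_gt0 // HM.
have := sup_upper_bound hs; move/(_ (vnorm p (M *m x) / vnorm p x)).
have Sx : S (vnorm p (M *m x) / vnorm p x) by exists x.
move/(_ Sx); rewrite -/(opnorm p M) ler_pdivrMr // => h.
apply: le_trans h _; rewrite ler_wpM2r ?vnorm_ge0 //.
by rewrite le_max lexx orbT.
Qed.


Lemma cvg_sum_seq (I : Type) (s : seq I) (f : I -> nat -> R) (l : I -> R) :
  (forall i, f i n @[n --> \oo] --> l i) ->
  \sum_(i <- s) f i n @[n --> \oo] --> \sum_(i <- s) l i.
Proof.
move=> H; elim: s => [|a s IH].
  under eq_cvg do rewrite big_nil.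
  by rewrite big_nil; apply: cvg_cst.
under eq_cvg do rewrite big_cons.
by rewrite big_cons; apply: cvgD.
Qed.

Lemma fixpt (M : 'M[R]_k) q (c : 'cV[R]_k) : 0 <= q < 1 ->
  (forall x, vnorm p (M *m x) <= q * vnorm p x) ->
  exists x : 'cV[R]_k, x - M *m mabs x = c.
Proof.
move=> /andP[q0 q1] HM.
pose T := fun x : 'cV[R]_k => c + M *m mabs x.
pose u := fun n => iter n T 0.
have uS n : u n.+1 = T (u n) by [].
pose d0 := vnorm p (u 1%N - u 0%N).
have hd : forall n, vnorm p (u n.+1 - u n) <= q ^+ n * d0.
  elim => [|n IH]; first by rewrite expr0 mul1r.
  rewrite uS [u n.+1]uS /T opprD addrACA subrr add0r -mulmxBr.
  apply: le_trans (HM _) _; rewrite exprS -mulrA ler_wpM2l //.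
  apply: le_trans IH; apply: vnorm_mono => i; rewrite !mxE.
  exact: ler_dist_dist.
have hl : forall i : 'I_k, exists L : R, (fun n => u n i 0) @ \oo --> L.
  move=> i.
  pose w := telescope (fun n => u n i 0).
  have hw n : `|w n| <= geometric d0 q n.
    rewrite /w /telescope /geometric /= mulrC.
    apply: le_trans (hd n); have := vnorm_coord (u n.+1 - u n) i.
    by rewrite !mxE.
  have cw : cvgn (series w).
    apply: normed_cvg.
    apply: (@series_le_cvg _ _ (geometric d0 q)).
    - by move=> n /=.
    - by move=> n; rewrite /geometric /= mulr_ge0 ?exprn_ge0 ?vnorm_ge0.
    - exact: hw.
    - by apply: is_cvg_geometric_series; rewrite ger0_norm.
  move: cw; rewrite /w telescopeK => cw.
  exists (limn (fun n => u n i 0 - u 0%N i 0) + u 0%N i 0).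
  have -> : (fun n => u n i 0) = (fun n => (u n i 0 - u 0%N i 0) + u 0%N i 0).
    by apply: funext => n; rewrite subrK.
  by apply: cvgD => //; apply: cvg_cst.
pose L := fun i : 'I_k => xget (0:R) (fun l => (fun n => u n i 0) @ \oo --> l).
have hL : forall i : 'I_k, (fun n => u n i 0) @ \oo --> L i.
  move=> i; rewrite /L; case: xgetP => //.
  by have [l hl'] := hl i => /(_ l).
exists (\col_i L i).
apply/matrixP => i j; rewrite (ord1 j) !mxE.
have e1 : (fun n => u n.+1 i 0) @ \oo --> L i by have := hL i; rewrite -cvg_shiftS.
have e2 : (fun n => u n.+1 i 0) @ \oo --> c i 0 + \sum_j M i j * `|L j|.
  have -> : (fun n => u n.+1 i 0) = (fun n => c i 0 + \sum_j M i j * `|u n j 0|).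
    by apply: funext => n; rewrite uS /T !mxE; congr (_ + _); apply: eq_bigr => l _; rewrite !mxE.
  apply: cvgD; first exact: cvg_cst.
  apply: (@cvg_sum_seq _ _ (fun l n => M i l * `|u n l 0|) (fun l => M i l * `|L l|)) => l; apply: cvgMl_tmp.
  exact: cvg_norm.
have := cvg_unique (@norm_hausdorff _ _) e1 e2 => ->.
rewrite -addrA [X in _ + X](_ : _ = 0) ?addr0 //; apply/eqP; rewrite subr_eq0; apply/eqP.
by apply: eq_bigr => l _; rewrite !mxE.
Qed.

End VN.

Lemma zmod_helper (V : zmodType) (b a c : V) : b - a + c + (a - c) = b.
Proof. by rewrite -addrA (addrC c) subrK subrK. Qed.

Lemma trunc_nat (R : realType) (k : nat) : Num.trunc (k%:R : R) = k.
Proof. by apply: truncn_def; rewrite lexx ltr_nat ltnSn. Qed.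

Lemma sum_pick (R : realType) (m n : nat) (f : 'I_m -> 'I_n) (g : 'I_m -> R) j :
  injective f ->
  \sum_i (f i == j)%:R * g i = if [pick i | f i == j] is Some i then g i else 0.
Proof.
move=> finj; case: pickP => [i /eqP fi | H].
  rewrite (bigD1 i) /= ?fi ?eqxx // mul1r big1 ?addr0 // => l li.
  case: eqP => [fl|]; last by rewrite mul0r.
  by move: li; rewrite (finj l i) ?eqxx // fl fi.
by rewrite big1 // => l _; rewrite H mul0r.
Qed.

Theorem theorem3p2 (R : realType) (m n : nat) (A B : 'M[R]_(m, n))
  (f : 'I_m -> 'I_n) (p : \bar R) (b : 'cV[R]_m) :
  (m < n)%N ->
  \rank A = m ->
  injective f ->
  colsub f A \in unitmx ->
  (1%:E <= p)%E ->
  opnorm p (invmx (colsub f A) *m colsub f B) < 1 ->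
  infinite_set [set x : 'cV[R]_n | A *m x - B *m mabs x = b].
Proof.
move=> mn _ finj A1u hp hM.
have [q [hq Hq]] := @contraction _ _ _ hp _ hM.
have [j0 hj0] : exists j0 : 'I_n, forall i, f i != j0.
  have : ~~ ([set: 'I_n]%SET \subset codom f).
    apply/negP => /subset_leq_card; rewrite cardsT card_ord card_codom // card_ord.
    by rewrite leqNgt mn.
  case/subsetPn => j _ hj; exists j => i; apply: contraNneq hj => <-.
  exact: codom_f.
pose P : 'M[R]_(n, m) := \matrix_(j, i) (f i == j)%:R.
pose e : 'cV[R]_n := \col_j (j == j0)%:R.
set A1 := colsub f A; set B1 := colsub f B.
have hAP : forall C : 'M[R]_(m, n), C *m P = colsub f C.
  move=> C; apply/matrixP => k i; rewrite !mxE.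
  rewrite (bigD1 (f i)) //= big1 ?addr0; first by rewrite mxE eqxx mulr1.
  by move=> j /negbTE ji; rewrite mxE eq_sym ji mulr0.
have hX : forall t : R, exists x : 'cV[R]_n,
    A *m x - B *m mabs x = b /\ x j0 0 = t.
  move=> t.
  pose b' := b - t *: (A *m e) + `|t| *: (B *m e).
  have [y hy] := @fixpt _ _ _ hp _ _ (invmx A1 *m b') hq Hq.
  exists (P *m y + t *: e); split; last first.
    rewrite !mxE (eqxx j0) mulr1 big1 ?add0r // => i _.
    by rewrite mxE (negbTE (hj0 i)) mul0r.
  have habs : mabs (P *m y + t *: e) = P *m mabs y + `|t| *: e.
    apply/matrixP => j z; rewrite (ord1 z) !mxE.
    under eq_bigr do rewrite mxE.
    under [X in _ = X + _]eq_bigr do rewrite !mxE.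
    rewrite (@sum_pick _ _ _ f (fun i => y i 0) j finj).
    rewrite (@sum_pick _ _ _ f (fun i => `|y i 0|) j finj).
    have [->|jj0] := eqVneq j j0.
      case: pickP => [i /eqP fi|_]; first by move: (hj0 i); rewrite fi eqxx.
      by rewrite !mulr1 !add0r.
    rewrite !mulr0 !addr0.
    by case: pickP => [i _|_]; rewrite ?normr0.
  have key : A1 *m y - B1 *m mabs y = b'.
    rewrite /B1 -[colsub f B](mulKVmx A1u) -mulmxA -mulmxBr hy.
    exact: mulKVmx.
  rewrite habs !mulmxDr !mulmxA !hAP -!scalemxAr -/A1 -/B1.
  rewrite opprD addrACA key /b'.
  exact: zmod_helper.
move=> fin.
pose g := fun x : 'cV[R]_n => Num.trunc (x j0 0).
have hfin := finite_image g fin.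
apply: infinite_nat; apply: sub_finite_set hfin => k _.
have [x [hx1 hx2]] := hX k%:R.
by exists x => //; rewrite /g hx2 trunc_nat.
Qed.
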